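(* Let $\mathscr{A}$ be a finite alphabet with more than one letter and let $\mathcal{D}$ be a dictionary over $\mathscr{A}$ with subword complexity function $p(k)=\#(\mathcal{D}\cap\mathscr{A}^k)$. Then for every $k\in\mathbb{N}$, $n_{br}^\pm(k)\leq p(k+1)-p(k)$ and $$\frac{p(k+1)-p(k)}{\#\mathscr{A}-1}\leq n_{br}(k)\leq 2\big(p(k+1)-p(k)\big).$$ Moreover these estimates are optimal.
   Context: A dictionary is a non-empty set $\mathcal{D}$ of finite words over $\mathscr{A}$ containing the empty word, closed under taking subwords, and such that for each $u\in\mathcal{D}$ there are letters $a,b$ with $aub\in\mathcal{D}$. The GAP-graph $\mathscr{G}_k$ has vertex set $\mathcal{D}\cap\mathscr{A}^k$, edge set $\mathcal{D}\cap\mathscr{A}^{k+1}$, the edge $e=a_0\cdots a_k$ going from $\partial_0e=a_0\cdots a_{k-1}$ to $\partial_1e=a_1\cdots a_k$. For a vertex $u$, $\partial^+u$ (resp. $\partial^-u$) is the number of edges $e$ with $\partial_0e=u$ (resp. $\partial_1e=u$). $n_{br}^+(k)$ (resp. $n_{br}^-(k)$) is the number of vertices $u$ of $\mathscr{G}_k$ with $\partial^+u>1$ (resp. $\partial^-u>1$), and $n_{br}(k)$ is the number of vertices $u$ with $\partial^+u>1$ or $\partial^-u>1$. *)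

(* Defs.v *)
From mathcomp Require Import all_boot all_order all_algebra.
Set Implicit Arguments. Unset Strict Implicit. Unset Printing Implicit Defensive.

(* Words over the alphabet A are sequences; a set of words is a boolean
   predicate on seq A.  "Subword" = contiguous factor (seq.infix). *)
Section Dict.
Variable A : finType.

Definition dictionary (D : pred (seq A)) : Prop :=
  [/\ D [::],
      (forall u w : seq A, D w -> infix u w -> D u) &
      (forall u : seq A, D u -> exists a b : A, D (a :: rcons u b))].

Definition compl (D : pred (seq A)) (k : nat) : nat :=
  #|[set w : k.-tuple A | D w]|.

(* GAP-graph G_k: vertices = words of length k in D, edges = words of
   length k+1 in D; edge e goes from take k e (∂0) to drop 1 e (∂1). *)
Definition outdeg (D : pred (seq A)) (k : nat) (u : k.-tuple A) : nat :=
  #|[set e : k.+1.-tuple A | D e & take k e == u]|.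
Definition indeg (D : pred (seq A)) (k : nat) (u : k.-tuple A) : nat :=
  #|[set e : k.+1.-tuple A | D e & drop 1 e == u]|.

Definition nbr_plus (D : pred (seq A)) (k : nat) : nat :=
  #|[set u : k.-tuple A | D u & 1 < outdeg D u]|.
Definition nbr_minus (D : pred (seq A)) (k : nat) : nat :=
  #|[set u : k.-tuple A | D u & 1 < indeg D u]|.
Definition nbr (D : pred (seq A)) (k : nat) : nat :=
  #|[set u : k.-tuple A | D u & (1 < outdeg D u) || (1 < indeg D u)]|.
End Dict.

(* Main.v *)
Require Import Defs.
From mathcomp Require Import all_boot all_order all_algebra.
From mathcomp Require Import zify.
Set Implicit Arguments. Unset Strict Implicit. Unset Printing Implicit Defensive.

Section S.
Variable A : finType.
Variable D : pred (seq A).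
Hypothesis dD : dictionary D.
Variable k : nat.

Lemma size_tk (e : k.+1.-tuple A) : size (take k e) == k.
Proof. by rewrite size_take size_tuple ltnSn. Qed.
Lemma size_dp (e : k.+1.-tuple A) : size (drop 1 e) == k.
Proof. by rewrite size_drop size_tuple subn1. Qed.
Definition tk (e : k.+1.-tuple A) : k.-tuple A := Tuple (size_tk e).
Definition dp (e : k.+1.-tuple A) : k.-tuple A := Tuple (size_dp e).

Lemma Dinf u w : D w -> infix u w -> D u.
Proof. by case: dD => _ H _; apply: H. Qed.

Lemma D_tk (e : k.+1.-tuple A) : D e -> D (tk e).
Proof. move=> De; apply: Dinf De _; apply: prefixW; exact: prefix_take. Qed.
Lemma D_dp (e : k.+1.-tuple A) : D e -> D (dp e).
Proof. move=> De; apply: Dinf De _; apply: suffixW; exact: suffix_drop. Qed.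

Lemma part (g : k.+1.-tuple A -> k.-tuple A) : (forall e : k.+1.-tuple A, D e -> D (g e)) ->
  #|[set e : k.+1.-tuple A | D e]| =
  \sum_(u in [set u : k.-tuple A | D u]) #|[set e : k.+1.-tuple A | D e & g e == u]|.
Proof.
move=> Hg; rewrite -sum1_card (partition_big g (mem [set u : k.-tuple A | D u])); last first.
  by move=> e; rewrite !inE; apply: Hg.
apply: eq_bigr => u _; rewrite -sum1_card; apply: eq_bigl => e; by rewrite !inE.
Qed.

Lemma outdegE u : outdeg D u = #|[set e : k.+1.-tuple A | D e & tk e == u]|.
Proof. by apply: eq_card => e; rewrite !inE. Qed.
Lemma indegE u : indeg D u = #|[set e : k.+1.-tuple A | D e & dp e == u]|.
Proof. by apply: eq_card => e; rewrite !inE. Qed.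

Lemma compl_out : compl D k.+1 = \sum_(u in [set u : k.-tuple A | D u]) outdeg D u.
Proof. rewrite /compl (part D_tk); apply: eq_bigr => u _; by rewrite outdegE. Qed.
Lemma compl_in : compl D k.+1 = \sum_(u in [set u : k.-tuple A | D u]) indeg D u.
Proof. rewrite /compl (part D_dp); apply: eq_bigr => u _; by rewrite indegE. Qed.

Lemma size_rc (u : k.-tuple A) x : size (rcons u x) == k.+1.
Proof. by rewrite size_rcons size_tuple. Qed.
Definition rc (u : k.-tuple A) x : k.+1.-tuple A := Tuple (size_rc u x).
Lemma size_cs (u : k.-tuple A) x : size (x :: u) == k.+1.
Proof. by rewrite /= size_tuple. Qed.
Definition cs (u : k.-tuple A) x : k.+1.-tuple A := Tuple (size_cs u x).

Lemma out_gt0 (u : k.-tuple A) : D u -> 0 < outdeg D u.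
Proof.
case: dD => _ _ H /H [a [b Dab]].
have Drc : D (rcons u b).
  apply: Dinf Dab _; rewrite -cat1s; exact: suffix_infix.
rewrite card_gt0; apply/set0Pn; exists (rc u b); rewrite !inE Drc /=.
by rewrite -cats1 take_size_cat ?size_tuple.
Qed.
Lemma in_gt0 (u : k.-tuple A) : D u -> 0 < indeg D u.
Proof.
case: dD => _ _ H /H [a [b Dab]].
have Dcs : D (a :: u).
  apply: Dinf Dab _; rewrite -cats1 -cat_cons; exact: prefix_infix.
rewrite card_gt0; apply/set0Pn; exists (cs u a); rewrite !inE Dcs /=.
by rewrite drop0.
Qed.

Lemma out_le (u : k.-tuple A) : outdeg D u <= #|A|.
Proof.
rewrite outdegE; have H := leq_imset_card (rc u) [set: A]; rewrite cardsT in H.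
apply: leq_trans H; apply: subset_leq_card; apply/subsetP => e; rewrite !inE => /andP[_ /eqP Hu].
have : size (drop k e) = 1 by rewrite size_drop size_tuple subSnn.
case Hd: (drop k e) => [|x [|]] // _.
apply/imsetP; exists x; rewrite ?inE //; apply: val_inj => /=.
by rewrite -cats1 -Hd -Hu /= cat_take_drop.
Qed.
Lemma card_cond (P : pred (k.-tuple A)) :
  #|[set u : k.-tuple A | D u & P u]| = \sum_(u in [set u : k.-tuple A | D u]) (P u : nat).
Proof.
rewrite -sum1_card big_mkcond [RHS]big_mkcond; apply: eq_bigr => u _.
by rewrite !inE; case: (D u); case: (P u).
Qed.

Lemma complk : compl D k = \sum_(u in [set u : k.-tuple A | D u]) 1.
Proof. by rewrite sum1_card. Qed.

Lemma ineq1 : nbr_plus D k + compl D k <= compl D k.+1.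
Proof.
rewrite /nbr_plus card_cond complk compl_out -big_split /=; apply: leq_sum => u.
rewrite inE => /out_gt0; case: ltnP => /= h1 h2; lia.
Qed.
Lemma ineq2 : nbr_minus D k + compl D k <= compl D k.+1.
Proof.
rewrite /nbr_minus card_cond complk compl_in -big_split /=; apply: leq_sum => u.
rewrite inE => /in_gt0; case: ltnP => /= h1 h2; lia.
Qed.
Lemma ineq3 : compl D k.+1 <= compl D k + (#|A| - 1) * nbr D k.
Proof.
rewrite /nbr card_cond complk compl_out big_distrr -big_split /=; apply: leq_sum => u _.
have := out_le u; case: (ltnP 1 (outdeg D u)) => /= h1 h2; case: (1 < indeg D u) => /=; lia.
Qed.
Lemma ineq4 : nbr D k <= nbr_plus D k + nbr_minus D k.
Proof.
rewrite /nbr /nbr_plus /nbr_minus !card_cond -big_split /=; apply: leq_sum => u _.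
by case: (1 < _); case: (1 < _).
Qed.
End S.

Section Ex.
Variable A : finType.

Lemma compl0 (D : pred (seq A)) : dictionary D -> compl D 0 = 1.
Proof.
case=> D0 _ _; rewrite /compl (_ : [set w : 0.-tuple A | D w] = setT).
  by rewrite cardsT card_tuple.
by apply/setP => w; rewrite !inE tuple0.
Qed.

Lemma out0 (D : pred (seq A)) (u : 0.-tuple A) : outdeg D u = compl D 1.
Proof. by apply: eq_card => e; rewrite !inE take0 tuple0 eqxx andbT. Qed.
Lemma in0 (D : pred (seq A)) (u : 0.-tuple A) : indeg D u = compl D 1.
Proof.
apply: eq_card => e; rewrite !inE tuple0 /=.
by case: e => [[|x [|]]] //= _; rewrite andbT.
Qed.

Lemma constset (T : finType) (b : bool) : #|[set x : T | b]| = b * #|T|.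
Proof. by case: b; rewrite ?cardsT ?cards0 ?mul1n // (_ : [set x : T | false] = set0) ?cards0 //; apply/setP=> x; rewrite !inE. Qed.

Lemma nbr0 (D : pred (seq A)) : dictionary D ->
  [/\ nbr_plus D 0 = nat_of_bool (1 < compl D 1), nbr_minus D 0 = nat_of_bool (1 < compl D 1)
    & nbr D 0 = nat_of_bool (1 < compl D 1)].
Proof.
case=> D0 _ _.
have E : forall P : pred (0.-tuple A), (forall u, P u = (1 < compl D 1)) ->
   #|[set u : 0.-tuple A | D u & P u]| = nat_of_bool (1 < compl D 1).
  move=> P HP; rewrite (_ : [set u : 0.-tuple A | D u & P u] = [set u | 1 < compl D 1]).
    by rewrite constset card_tuple expn0 muln1.
  by apply/setP => u; rewrite !inE tuple0 D0 HP.
split; apply: E => u; by rewrite ?out0 ?in0 ?orbb.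
Qed.

Lemma cardL n (s : seq (n.-tuple A)) (P : pred (n.-tuple A)) : uniq s ->
  (forall e, P e = (e \in s)) -> #|[set e : n.-tuple A | P e]| = size s.
Proof.
move=> us HP; rewrite -(card_uniqP us); apply: eq_card => e; by rewrite inE HP.
Qed.

Variables a b : A.
Hypothesis hab : a != b.

Definition rr (x y : A) := (x == a) || (y == b).
Definition D1 (w : seq A) := sorted rr w && all (fun x => (x == a) || (x == b)) w.

Lemma rr_trans : transitive rr.
Proof.
move=> y x z; rewrite /rr; case: (eqVneq x a) => //= _ /eqP ->.
by rewrite eq_sym (negbTE hab).
Qed.

Lemma dict1 : dictionary D1.
Proof.
split => //.
  move=> u w /andP[s1 a1] /infixW sub; apply/andP; split.
    exact: (subseq_sorted rr_trans sub s1).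
  by apply/allP => x /(mem_subseq sub) /(allP a1).
move=> u /andP[s1 a1]; exists a, b; apply/andP; split; last first.
  by rewrite /= all_rcons eqxx eqxx orbT a1.
case: u s1 {a1} => [|y u] /= s1; first by rewrite /rr eqxx.
by rewrite /rr eqxx /= rcons_path s1 /= eqxx orbT.
Qed.

Lemma compl1_1 : compl D1 1 = 2.
Proof.
rewrite /compl (cardL (s := [:: [tuple a]; [tuple b]])) //.
  by rewrite /= inE andbT -val_eqE /= eqseq_cons andbT.
case => [[|x [|]]] //= He; rewrite !inE -!val_eqE /= !eqseq_cons !andbT /D1 /=.
by rewrite andbT.
Qed.

Lemma compl1_2 : compl D1 2 = 3.
Proof.
rewrite /compl (cardL (s := [:: [tuple a; a]; [tuple a; b]; [tuple b; b]])) //.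
  rewrite /= !inE -!val_eqE /= !eqseq_cons !andbT !eqxx /=.
  by rewrite (negbTE hab).
case => [[|x [|y [|]]]] //= He; rewrite !inE -!val_eqE /= !eqseq_cons !andbT /D1 /= /rr andbT.
have nba : (b == a) = false by rewrite eq_sym (negbTE hab).
case: (eqVneq x a) => [xa|xa]; [|case: (eqVneq x b) => [xb|xb]];
  (case: (eqVneq y a) => [ya|ya]; [|case: (eqVneq y b) => [yb|yb]]);
  try subst x; try subst y; by rewrite ?eqxx ?nba ?(negbTE hab) ?(negbTE xa) ?(negbTE xb) ?(negbTE ya) ?(negbTE yb).
Qed.

Lemma nbr1 : nbr D1 1 = 2.
Proof.
rewrite -(compl1_1) /nbr /compl; apply: eq_card => u; rewrite !inE.
case: u => [[|x [|]]] //= He.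
have nba : (b == a) = false by rewrite eq_sym (negbTE hab).
case Dx: (D1 [:: x]) => //=; apply/orP; move: Dx; rewrite /D1 /= andbT => /orP[] /eqP xe; [left|right].
  apply/card_gt1P; exists [tuple a; a], [tuple a; b]; rewrite !inE -!val_eqE /= xe.
  rewrite /D1 /= /rr !eqxx /= ?orbT ?nba !eqseq_cons !eqxx /= (negbTE hab). by [].
apply/card_gt1P; exists [tuple a; b], [tuple b; b]; rewrite !inE -!val_eqE /= xe.
rewrite /D1 /= /rr !eqxx /= ?orbT ?nba !eqseq_cons !eqxx /= ?nba. by rewrite (negbTE hab).
Qed.
End Ex.

Definition DT (A : finType) : pred (seq A) := fun _ => true.
Lemma dictT (A : finType) (a : A) : dictionary (@DT A).
Proof. by split => // u _; exists a, a. Qed.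

Lemma complT1 (A : finType) : compl (@DT A) 1 = #|A|.
Proof.
rewrite /compl (_ : [set w : 1.-tuple A | @DT A w] = setT) ?cardsT ?card_tuple ?expn1 //.
Qed.

Import Order.TTheory GRing.Theory Num.Theory.
Local Open Scope ring_scope.

Theorem proposition12 (A : finType) (hA : (1 < #|A|)%N) :
  (forall (D : pred (seq A)), dictionary D -> forall k : nat,
     [/\ ((nbr_plus D k)%:R <= (compl D k.+1)%:R - (compl D k)%:R :> rat),
         ((nbr_minus D k)%:R <= (compl D k.+1)%:R - (compl D k)%:R :> rat),
         (((compl D k.+1)%:R - (compl D k)%:R) / (#|A|%:R - 1)
            <= (nbr D k)%:R :> rat) &
         ((nbr D k)%:R <= 2 * ((compl D k.+1)%:R - (compl D k)%:R) :> rat)])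
  /\
  (* optimality: each bound is attained, non-trivially (p(k+1) <> p(k)) *)
  [/\ (exists (D : pred (seq A)) (k : nat), [/\ dictionary D,
          compl D k.+1 != compl D k &
          (nbr_plus D k)%:R = (compl D k.+1)%:R - (compl D k)%:R :> rat]),
      (exists (D : pred (seq A)) (k : nat), [/\ dictionary D,
          compl D k.+1 != compl D k &
          (nbr_minus D k)%:R = (compl D k.+1)%:R - (compl D k)%:R :> rat]),
      (exists (D : pred (seq A)) (k : nat), [/\ dictionary D,
          compl D k.+1 != compl D k &
          ((compl D k.+1)%:R - (compl D k)%:R) / (#|A|%:R - 1)
            = (nbr D k)%:R :> rat]) &
      (exists (D : pred (seq A)) (k : nat), [/\ dictionary D,
          compl D k.+1 != compl D k &
          (nbr D k)%:R = 2 * ((compl D k.+1)%:R - (compl D k)%:R) :> rat])].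
Proof.
split.
  move=> D dD k.
  have h1 := ineq1 dD k; have h2 := ineq2 dD k; have h3 := ineq3 dD k.
  have h4 := ineq4 D k.
  have le01 : (compl D k <= compl D k.+1)%N by lia.
  have hA1 : (#|A|%:R - 1 : rat) = (#|A| - 1)%:R by rewrite natrB // ltnW.
  rewrite -natrB // hA1 ler_pdivrMr ?ltr0n ?subn_gt0 // -!natrM !ler_nat.
  split; lia.
case/card_gt1P: (hA) => a [b [_ _ hab]].
have d1 := dict1 hab.
have [n1 n2 n3] := nbr0 d1.
split.
- exists (D1 a b), 0%N; split => //; rewrite ?(compl1_1 hab) ?compl0 // n1 (compl1_1 hab).
  by rewrite -natrB.
- exists (D1 a b), 0%N; split => //; rewrite ?(compl1_1 hab) ?compl0 // n2 (compl1_1 hab).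
  by rewrite -natrB.
- have dT := dictT a.
  have [_ _ m3] := nbr0 dT.
  exists (@DT A), 0%N; split; first exact: dT.
    by rewrite complT1 (compl0 dT) neq_ltn hA orbT.
  rewrite m3 complT1 (compl0 dT) hA /=.
  by rewrite divff // subr_eq0 pnatr_eq1 neq_ltn hA orbT.
- exists (D1 a b), 1%N; split; first exact: d1.
    by rewrite (compl1_1 hab) (compl1_2 hab).
  rewrite (compl1_1 hab) (compl1_2 hab) (nbr1 hab).
  by rewrite -natrB // -natrM.
Qed.
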